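(* For $k\ge2$, the minimum Hamming distance of $\mathcal{S}_k^\beta$ is $d_H(\mathcal{S}_k^\beta)=L_\beta(k)-q^{s-1}L_\beta(k-1)=q^{s(k-1)}$, where $L_\beta(m)=q^{(s-1)(m-1)}\frac{q^m-1}{q-1}$.
   Context: Let $R$ be a finite commutative chain ring with maximal ideal $\langle\gamma\rangle$, nilpotency index $s$ and residue field $R/\langle\gamma\rangle\cong\mathbb{F}_q$. Fix coset representatives $T=\{e_0,\dots,e_{q-1}\}$ with $e_0=0,e_1=1$, ordered $e_0<\dots<e_{q-1}$; each $r\in R$ is uniquely $\sum_{i=0}^{s-1}r_i\gamma^i$, $r_i\in T$; order $R$ by $x>y$ iff $x_i>y_i$ in $T$ for the largest $i$ with $x_i\neq y_i$; list $R=\{\rho_0,\dots,\rho_{q^s-1}\}$ increasingly. $\mathbf{a}^{(m)}$ is the constant vector of length $m$. Define $G_1^\alpha=(\rho_0\ \cdots\ \rho_{q^s-1})$ and, for $k>1$, $G_k^\alpha$ as the matrix of $q^s$ column blocks, the $j$-th having first row $\boldsymbol{\rho_j}^{(q^{s(k-1)})}$ and $G_{k-1}^\alpha$ below. List $\langle\gamma\rangle$ increasingly as $a_0\gamma<\dots<a_{q^{s-1}-1}\gamma$. Define $G_1^\beta=(1)$ and, for $k>1$, $G_k^\beta$ as the matrix with column blocks: first a block with first row $\mathbf{1}^{(q^{s(k-1)})}$ and $G_{k-1}^\alpha$ below; then for each $j=0,\dots,q^{s-1}-1$ a block with first row the constant vector with entry $a_j\gamma$ and $G_{k-1}^\beta$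 below. $\mathcal{S}_k^\beta$ is the $R$-submodule generated by the rows of $G_k^\beta$. The minimum Hamming distance of a code is the minimum Hamming distance (number of differing coordinates) between two distinct codewords. *)

(* Defs.v *)
From HB Require Import structures.
From mathcomp Require Import all_boot all_order all_algebra.
Set Implicit Arguments. Unset Strict Implicit. Unset Printing Implicit Defensive.
Import GRing.Theory.
Local Open Scope ring_scope.

Section ChainCodes.
Variable R : finComUnitRingType.

(* R is a finite commutative chain ring with maximal ideal <g>
   (= set of non-units) and nilpotency index s of g. *)
Definition chain_ring (g : R) (s : nat) : Prop :=
  [/\ g \notin GRing.unit,
      (forall x : R, x \notin GRing.unit -> exists y, x = g * y),
      g ^+ s = 0 & g ^+ s.-1 != 0].

(* T = [:: e_0; ...; e_(q-1)] is a system of coset representatives of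
   R / <g> listed in the fixed order e_0 < ... < e_(q-1), with e_0 = 0, e_1 = 1;
   q := size T. *)
Definition coset_reps (g : R) (T : seq R) : Prop :=
  [/\ T`_0 = 0, T`_1 = 1 &
      forall x : R, exists! i : nat, (i < size T)%N /\ exists y, x - T`_i = g * y].

Variables (g : R) (s : nat) (T : seq R).
Let q := size T.

(* rho j = sum_(i<s) e_(j_i) g^i where j = sum_i j_i q^i (base-q digits);
   this is the j-th element of R in the increasing order. *)
Definition rho (j : nat) : R :=
  \sum_(i < s) T`_((j %/ q ^ i) %% q) * g ^+ i.

(* a_j g : the j-th element of <g> in increasing order (those with r_0 = e_0 = 0). *)
Definition agamma (j : nat) : R := rho (j * q).

(* G_k^alpha, entries indexed by (row i, column c), q^(sk) columns *)
Fixpoint Galpha (k i c : nat) : R :=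
  match k with
  | 0 => 0
  | k'.+1 => if i == 0%N then rho (c %/ q ^ (s * k'))
             else Galpha k' i.-1 (c %% q ^ (s * k'))
  end.

(* number of columns of G_k^beta *)
Fixpoint Lw (k : nat) : nat :=
  match k with
  | 0 => 0
  | k'.+1 => match k' with
             | 0 => 1
             | _ => (q ^ (s * k') + q ^ s.-1 * Lw k')%N
             end
  end.

Fixpoint Gbeta (k i c : nat) : R :=
  match k with
  | 0 => 0
  | k'.+1 =>
    match k' with
    | 0 => 1
    | _ => if (c < q ^ (s * k'))%N then
             (if i == 0%N then 1 else Galpha k' i.-1 c)
           else
             let c' := (c - q ^ (s * k'))%N in
             if i == 0%N then agamma (c' %/ Lw k')
             else Gbeta k' i.-1 (c' %% Lw k')
    end
  end.

Definition Sbeta (k : nat) : 'rV[R]_(Lw k) -> Prop :=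
  fun v => exists a : 'I_k -> R,
    v = \row_(c < Lw k) \sum_(i < k) a i * Gbeta k i c.

End ChainCodes.

Definition hamming (R : eqType) (n : nat) (x y : 'rV[R]_n) : nat :=
  #|[set j : 'I_n | x ord0 j != y ord0 j]|.

Definition min_hamming_distance (R : eqType) (n : nat) (C : 'rV[R]_n -> Prop)
  (d : nat) : Prop :=
  (exists x y, [/\ C x, C y, x != y & hamming x y = d]) /\
  (forall x y, C x -> C y -> x != y -> (d <= hamming x y)%N).

Definition Lbeta (q s m : nat) : nat :=
  (q ^ ((s - 1) * (m - 1)) * ((q ^ m - 1) %/ (q - 1)))%N.

(* Main.v *)
Require Import Defs.
From mathcomp Require Import all_boot all_order all_algebra.
From mathcomp Require Import ring zify.
Set Implicit Arguments. Unset Strict Implicit. Unset Printing Implicit Defensive.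
Import GRing.Theory.

Lemma sum_split (a b : nat) (F : nat -> nat) :
  \sum_(0 <= c < a * b) F c = \sum_(0 <= x < a) \sum_(0 <= y < b) F (x * b + y).
Proof.
elim: a => [|a IH]; first by rewrite mul0n !big_geq.
rewrite mulSnr big_nat_recr //= (big_cat_nat (n := a * b)) ?leq_addr //=.
rewrite IH; congr (_ + _).
rewrite -{1}[a * b]add0n big_addn addKn.
by apply: eq_bigr => i _; rewrite addnC.
Qed.

Lemma sum_shift (a n : nat) (F : nat -> nat) :
  \sum_(a <= c < a + n) F c = \sum_(0 <= c < n) F (a + c).
Proof.
rewrite -{1}[a]add0n big_addn addKn.
by apply: eq_bigr => i _; rewrite addnC.
Qed.

Lemma sum_le1 n (P : nat -> bool) :
  (forall y y', y < n -> y' < n -> P y -> P y' -> y = y') ->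
  \sum_(0 <= y < n) (P y : nat) <= 1.
Proof.
elim: n => [|n IH] H; first by rewrite big_geq.
rewrite big_nat_recr //=.
case Pn: (P n).
  rewrite big_nat_cond big1 //=.
  move=> i; rewrite andbT => Hi.
  case Pi: (P i) => //.
  have E := H i n (ltnW Hi) (ltnSn n) Pi Pn. by rewrite E ltnn in Hi.
rewrite addn0; apply: IH => y y' Hy Hy'; apply: H; exact: ltnW.
Qed.

Definition colA (R : finComUnitRingType) (g : R) s T m (a : nat -> R) c :=
  (\sum_(0 <= i < m) a i * Galpha g s T m i c)%R.
Definition colB (R : finComUnitRingType) (g : R) s T m (a : nat -> R) c :=
  (\sum_(0 <= i < m) a i * Gbeta g s T m i c)%R.

Lemma s_gt0 (R : finComUnitRingType) (g : R) s : chain_ring g s -> 0 < s.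
Proof.
case=> _ _ Hs _; case: s Hs => // H.
by rewrite expr0 in H; have := oner_neq0 R; rewrite H eqxx.
Qed.

Lemma q_gt1 (R : finComUnitRingType) (g : R) T : coset_reps g T -> 1 < size T.
Proof.
case=> _ H1 _; rewrite ltnNge; apply/negP => Hle; move: H1.
by rewrite nth_default // => /eqP; rewrite eq_sym oner_eq0.
Qed.

Lemma socle_div (R : finComUnitRingType) (g a y : R) s : chain_ring g s ->
  a != 0%R -> (g * a = 0)%R -> (a * y = 0)%R -> exists z, y = (g * z)%R.
Proof.
case=> _ Hn _ _ Ha _ Hay; apply: Hn; apply/negP => Hu.
by move/eqP: Ha; apply; rewrite -(mulrK Hu a) Hay mul0r.
Qed.

Lemma rho_mod (R : finComUnitRingType) (g : R) s T x : 0 < s ->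
  exists w, rho g s T x = (T`_(x %% size T) + g * w)%R.
Proof.
case: s => // s _; rewrite /rho big_ord_recl /= expn0 divn1 expr0 mulr1.
exists (\sum_(i < s) T`_((x %/ size T ^ i.+1) %% size T) * g ^+ i)%R.
rewrite mulr_sumr; congr (_ + _)%R; apply: eq_bigr => i _.
by rewrite exprS mulrCA.
Qed.

Lemma coset_uniq (R : finComUnitRingType) (g : R) T v v' z : coset_reps g T ->
  v < size T -> v' < size T -> (T`_v - T`_v' = g * z)%R -> v = v'.
Proof.
case=> _ _ H Hv Hv' E; have [i [_ Hu]] := H (T`_v)%R.
rewrite -(Hu v) ?(Hu v') //; split => //; first by exists z.
by exists 0%R; rewrite subrr mulr0.
Qed.

Lemma Galpha0 (R : finComUnitRingType) (g : R) s T m x y :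
  y < size T ^ (s * m) ->
  Galpha g s T m.+1 0 (x * size T ^ (s * m) + y) = rho g s T x.
Proof.
move=> Hy /=; rewrite divnMDl ?divn_small ?addn0 //.
exact: (leq_ltn_trans (leq0n y) Hy).
Qed.

Lemma GalphaS (R : finComUnitRingType) (g : R) s T m i x y :
  y < size T ^ (s * m) ->
  Galpha g s T m.+1 i.+1 (x * size T ^ (s * m) + y) = Galpha g s T m i y.
Proof. by move=> Hy /=; rewrite modnMDl modn_small. Qed.

Lemma colA_split (R : finComUnitRingType) (g : R) s T m a x y :
  y < size T ^ (s * m) ->
  colA g s T m.+1 a (x * size T ^ (s * m) + y) =
  (a 0 * rho g s T x + colA g s T m (fun i => a i.+1) y)%R.
Proof.
move=> Hy; rewrite /colA big_nat_recl // Galpha0 //; congr (_ + _)%R.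
by apply: eq_bigr => i _; rewrite GalphaS.
Qed.

Lemma alpha_zeros (R : finComUnitRingType) (g : R) s T m (a : nat -> R) (b : R) :
  chain_ring g s -> coset_reps g T ->
  (forall i, i < m -> (g * a i = 0)%R) -> (exists2 i, i < m & a i != 0%R) ->
  size T * \sum_(0 <= c < size T ^ (s * m)) (b + colA g s T m a c == 0)%R
    <= size T ^ (s * m).
Proof.
move=> Hc Ht; elim: m a b => [|m IH] a b Hs [i Hi Hai] //.
have s0 := s_gt0 Hc; have q1 := q_gt1 Ht.
set Q := size T ^ (s * m).
have Q0 : 0 < Q by rewrite expn_gt0 (ltn_trans _ q1).
rewrite mulnS expnD sum_split.
have E : forall x, \sum_(0 <= y < Q) (b + colA g s T m.+1 a (x * Q + y) == 0)%R =
   \sum_(0 <= y < Q) ((b + a 0 * rho g s T x) + colA g s T m (fun i => a i.+1) y == 0)%R.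
  move=> x; rewrite big_nat_cond [RHS]big_nat_cond; apply: eq_bigr => y.
  rewrite andbT => /andP[_ Hy]; by rewrite colA_split // addrA.
under eq_bigr do rewrite E.
case: (boolP [exists j : 'I_m, a j.+1 != 0%R]) => [/existsP[j Hj]|Hn].
  rewrite big_distrr /= -[X in _ <= X * _]subn0 -sum_nat_const_nat.
  apply: leq_sum => x _; apply: IH; first by move=> l Hl; apply: Hs.
  by exists j.
have Z : forall y, colA g s T m (fun i => a i.+1) y = 0%R.
  move=> y; rewrite /colA big_nat_cond big1 // => l; rewrite andbT => /andP[_ Hl].
  move/existsPn: Hn => /(_ (Ordinal Hl)) /negPn /eqP -> ; by rewrite mul0r.
under eq_bigr do under eq_bigr do rewrite Z addr0.
under eq_bigr do rewrite sum_nat_const_nat subn0.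
rewrite -big_distrr /= mulnCA [X in _ <= X]mulnC leq_pmul2l //.
have a0 : a 0 != 0%R.
  case: i Hi Hai => // j Hj Haj; move/existsPn: Hn => /(_ (Ordinal (Hj : j < m))).
  by rewrite Haj.
have Hs0 := Hs.
clear IH Hs E Z Q0 Hn Hai Hi i Q.
case: s s0 Hc => // s _ Hc.
rewrite expnSr sum_split mulnC.
rewrite leq_mul2r; apply/orP; right.
rewrite -[X in _ <= X]subn0 -[X in _ <= X]muln1 -sum_nat_const_nat.
apply: leq_sum => u _; apply: sum_le1 => v v' Hv Hv' /eqP E1 /eqP E2.
have Hz : (a 0 * (rho g s.+1 T (u * size T + v) - rho g s.+1 T (u * size T + v')) = 0)%R.
  by rewrite mulrBr -[X in (X - _)%R](addKr b) E1 -[X in (_ - X)%R](addKr b) E2 subrr.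
have [z Ez] := socle_div Hc a0 (Hs0 _ (ltn0Sn m)) Hz.
have [w Ew] := rho_mod g T (u * size T + v) (ltn0Sn s).
have [w' Ew'] := rho_mod g T (u * size T + v') (ltn0Sn s).
rewrite Ew Ew' !modnMDl !modn_small // in Ez.
apply: (coset_uniq (z := z - w + w')%R Ht) => //.
by rewrite mulrDr mulrBr -Ez; ring.
Qed.

Lemma sum_bool_compl n (P : nat -> bool) :
  \sum_(0 <= c < n) (P c : nat) + \sum_(0 <= c < n) (~~ P c : nat) = n.
Proof.
rewrite -big_split /= -[X in _ = X]subn0 -[X in _ = X]muln1 -sum_nat_const_nat.
by apply: eq_bigr => c _; case: (P c).
Qed.

Lemma LwS (R : finComUnitRingType) s (T : seq R) k :
  Lw s T k.+2 = size T ^ (s * k.+1) + size T ^ s.-1 * Lw s T k.+1.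
Proof. by []. Qed.

Lemma Lw_pos (R : finComUnitRingType) s (T : seq R) k :
  0 < size T -> 0 < Lw s T k.+1.
Proof.
move=> q0; case: k => [|k] //; rewrite LwS addn_gt0 expn_gt0 q0 //.
Qed.

Lemma agamma_ann (R : finComUnitRingType) (g x : R) s T j : 0 < s ->
  coset_reps g T -> (g * x = 0)%R -> (x * agamma g s T j = 0)%R.
Proof.
move=> s0 [T0 _ _] Hx; rewrite /agamma; have [w ->] := rho_mod g T (j * size T) s0.
by rewrite modnMl T0 add0r mulrA [(x * g)%R]mulrC Hx mul0r.
Qed.

Lemma colB_split1 (R : finComUnitRingType) (g : R) s T k a c :
  c < size T ^ (s * k.+1) ->
  colB g s T k.+2 a c = (a 0 + colA g s T k.+1 (fun i => a i.+1) c)%R.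
Proof.
move=> Hc; rewrite /colB /colA big_nat_recl //=; rewrite Hc mulr1; congr (_ + _)%R.
Qed.

Lemma GbetaE0 (R : finComUnitRingType) (g : R) s T k c :
  Gbeta g s T k.+2 0 c = if c < size T ^ (s * k.+1) then 1%R
     else agamma g s T ((c - size T ^ (s * k.+1)) %/ Lw s T k.+1).
Proof. by []. Qed.

Lemma GbetaES (R : finComUnitRingType) (g : R) s T k i c :
  Gbeta g s T k.+2 i.+1 c = if c < size T ^ (s * k.+1) then Galpha g s T k.+1 i c
     else Gbeta g s T k.+1 i ((c - size T ^ (s * k.+1)) %% Lw s T k.+1).
Proof. by []. Qed.

Lemma colB_split2 (R : finComUnitRingType) (g : R) s T k a j y :
  0 < size T -> y < Lw s T k.+1 ->
  colB g s T k.+2 a (size T ^ (s * k.+1) + (j * Lw s T k.+1 + y)) =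
  (a 0 * agamma g s T j + colB g s T k.+1 (fun i => a i.+1) y)%R.
Proof.
move=> q0 Hy; have L0 := Lw_pos s k q0.
rewrite /colB big_nat_recl //; congr (_ + _)%R.
  by rewrite GbetaE0 ltnNge leq_addr /= addKn divnMDl // divn_small // addn0.
by apply: eq_bigr => i _; rewrite GbetaES ltnNge leq_addr /= addKn modnMDl modn_small.
Qed.

Lemma beta_nz (R : finComUnitRingType) (g : R) s T k (a : nat -> R) :
  chain_ring g s -> coset_reps g T ->
  (forall i, i < k.+1 -> (g * a i = 0)%R) -> (exists2 i, i < k.+1 & a i != 0%R) ->
  size T ^ (s * k) <= \sum_(0 <= c < Lw s T k.+1) (colB g s T k.+1 a c != 0%R).
Proof.
move=> Hc Ht; have s0 := s_gt0 Hc; have q1 := q_gt1 Ht.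
have q0 : 0 < size T by apply: ltn_trans q1.
elim: k a => [|k IH] a Hs [i Hi Hai].
  rewrite muln0 expn0 big_nat1 /colB big_nat1 /= mulr1.
  by case: i Hi Hai => // _ ->.
set Q1 := size T ^ (s * k.+1).
rewrite LwS.
have Ecat : forall (n : nat) (F : nat -> nat), \sum_(0 <= c < Q1 + n) F c =
   \sum_(0 <= c < Q1) F c + \sum_(Q1 <= c < Q1 + n) F c.
  by move=> n F; apply: big_cat_nat; rewrite ?leq_addr.
rewrite Ecat (sum_shift Q1) sum_split.
have E2 : forall j, \sum_(0 <= y < Lw s T k.+1)
   (colB g s T k.+2 a (Q1 + (j * Lw s T k.+1 + y)) != 0%R) =
   \sum_(0 <= y < Lw s T k.+1) (colB g s T k.+1 (fun i => a i.+1) y != 0%R).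
  move=> j; rewrite big_nat_cond [RHS]big_nat_cond; apply: eq_bigr => y.
  rewrite andbT => /andP[_ Hy]; rewrite colB_split2 //.
  by rewrite agamma_ann ?add0r // Hs.
rewrite (eq_big_nat _ _ (F1 := fun j => \sum_(0 <= y < Lw s T k.+1)
   (colB g s T k.+2 a (Q1 + (j * Lw s T k.+1 + y)) != 0%R)) (fun j _ => E2 j)).
have E1 : \sum_(0 <= c < Q1) (colB g s T k.+2 a c != 0%R) =
    \sum_(0 <= c < Q1) (a 0 + colA g s T k.+1 (fun i => a i.+1) c != 0%R)%R.
  rewrite big_nat_cond [RHS]big_nat_cond; apply: eq_bigr => c.
  by rewrite andbT => /andP[_ Hc']; rewrite colB_split1.
rewrite E1 {E1 E2}.
case: (boolP [exists j : 'I_k.+1, a j.+1 != 0%R]) => [/existsP[j Hj]|Hn].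
  have Hs' : forall i, i < k.+1 -> (g * a i.+1 = 0)%R by move=> l Hl; apply: Hs.
  have Hz := alpha_zeros (a 0%N) Hc Ht Hs' (ex_intro2 _ _ (val j) (ltn_ord j) Hj).
  have Hb : \sum_(0 <= j < size T ^ s.-1) size T ^ (s * k) <=
     \sum_(0 <= j < size T ^ s.-1)
        \sum_(0 <= y < Lw s T k.+1) (colB g s T k.+1 (fun i => a i.+1) y != 0%R).
    apply: leq_sum => l _; apply: IH => //; by exists j.
  rewrite sum_nat_const_nat subn0 in Hb.
  have Hsum := sum_bool_compl Q1 (fun c => (a 0 + colA g s T k.+1 (fun i => a i.+1) c != 0)%R).
  move: Hz; rewrite -/Q1.
  under eq_bigr do rewrite -[(_ == _)]negbK.
  move=> Hz.
  have QE : Q1 = size T * (size T ^ s.-1 * size T ^ (s * k)).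
    by rewrite /Q1 mulnS expnD mulnA -expnS prednK.
  rewrite QE leq_pmul2l ?(ltn_trans _ q1) // in Hz.
  rewrite QE; rewrite QE in Hsum.
  set P := size T ^ s.-1 * size T ^ (s * k) in Hz Hb Hsum *.
  have Hz' : \sum_(0 <= c < size T * P)
     (~~ (a 0 + colA g s T k.+1 (fun i => a i.+1) c != 0)%R : nat) <= P by exact: Hz.
  lia.
have Z : forall c, colA g s T k.+1 (fun i => a i.+1) c = 0%R.
  move=> c; rewrite /colA big_nat_cond big1 // => l; rewrite andbT => /andP[_ Hl].
  move/existsPn: Hn => /(_ (Ordinal Hl)) /negPn /eqP -> ; by rewrite mul0r.
have a0 : a 0 != 0%R.
  case: i Hi Hai => // j Hj Haj; move/existsPn: Hn => /(_ (Ordinal (Hj : j < k.+1))).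
  by rewrite Haj.
under eq_bigr do rewrite Z addr0 a0.
by rewrite sum_nat_const_nat subn0 muln1 leq_addr.
Qed.

Lemma Lbeta_diff q s k : 1 < q -> 0 < s ->
  Lbeta q s k.+2 - q ^ (s - 1) * Lbeta q s k.+1 = q ^ (s * k.+1).
Proof.
move=> q1 s0.
have G : forall n, (q ^ n - 1) %/ (q - 1) = \sum_(i < n) q ^ i.
  move=> n; rewrite subn1 predn_exp -subn1 mulKn // subn_gt0 //.
rewrite /Lbeta !G !subn1 /= big_ord_recr /= mulnA -expnD.
rewrite -mulnS mulnDr addKn -expnD; congr (_ ^ _).
by rewrite -{2}[k.+1]mul1n -mulnDl addn1 prednK.
Qed.

Lemma hamming_row (R : finComUnitRingType) n (F G : nat -> R) :
  hamming (\row_(c < n) F c) (\row_(c < n) G c) = \sum_(0 <= c < n) (F c != G c).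
Proof.
rewrite /hamming -sum1_card big_mkcond /= big_mkord; apply: eq_bigr => i _.
by rewrite inE !mxE; case: (_ != _).
Qed.

Lemma chain_ring_gs (R : finComUnitRingType) (g : R) s : chain_ring g s -> (g ^+ s = 0)%R.
Proof. by case. Qed.
Lemma chain_ring_gs1 (R : finComUnitRingType) (g : R) s : chain_ring g s -> (g ^+ s.-1 != 0)%R.
Proof. by case. Qed.

Lemma sum_ord_colB (R : finComUnitRingType) (g : R) s T k (a : 'I_k.+1 -> R) (c : nat) :
  (\sum_(i < k.+1) a i * Gbeta g s T k.+1 i c)%R =
  colB g s T k.+1 (fun n => a (inord n)) c.
Proof.
rewrite /colB big_mkord; apply: eq_bigr => i _; by rewrite inord_val.
Qed.

Theorem corollary3p22 (R : finComUnitRingType) (g : R) (s : nat) (T : seq R)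
    (k : nat) :
  chain_ring g s -> coset_reps g T -> (2 <= k)%N ->
  min_hamming_distance (@Sbeta R g s T k)
    (Lbeta (size T) s k - size T ^ (s - 1) * Lbeta (size T) s (k - 1))%N
  /\ (Lbeta (size T) s k - size T ^ (s - 1) * Lbeta (size T) s (k - 1)
      = size T ^ (s * (k - 1)))%N.
Proof.
move=> Hc Ht Hk; have s0 := s_gt0 Hc; have q1 := q_gt1 Ht.
have q0 : 0 < size T by apply: ltn_trans q1.
case: k Hk => [|[|k]] // _.
have Ar := Lbeta_diff k q1 s0.
have E1 : k.+2 - 1 = k.+1 by [].
rewrite E1 Ar; split => //.
set Q1 := size T ^ (s * k.+1).
have Ecat : forall (n : nat) (F : nat -> nat), \sum_(0 <= c < Q1 + n) F c =
   \sum_(0 <= c < Q1) F c + \sum_(Q1 <= c < Q1 + n) F c.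
  by move=> n F; apply: big_cat_nat; rewrite ?leq_addr.
split.
  set a0 := fun n : nat => if n == 0 then (g ^+ s.-1)%R else 0%R.
  have Hd : hamming (\row_(c < Lw s T k.+2) colB g s T k.+2 a0 c)
     (\row_(c < Lw s T k.+2) (fun _ => 0%R : R) c) = Q1.
    rewrite (hamming_row _ _ (fun _ => 0%R)) LwS Ecat (sum_shift Q1) sum_split.
    have E2 : forall j, \sum_(0 <= y < Lw s T k.+1)
      (colB g s T k.+2 a0 (Q1 + (j * Lw s T k.+1 + y)) != 0%R) = 0.
      move=> j; rewrite big_nat_cond big1 // => y; rewrite andbT => /andP[_ Hy].
      rewrite colB_split2 // agamma_ann // ?add0r; last first.
        by rewrite /a0 /= -exprS prednK // (chain_ring_gs Hc).
      rewrite /colB big_nat_cond big1. by rewrite eqxx.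
      by move=> i _; rewrite /a0 /= mul0r.
    rewrite (eq_big_nat _ _ (F1 := fun j => \sum_(0 <= y < Lw s T k.+1)
      (colB g s T k.+2 a0 (Q1 + (j * Lw s T k.+1 + y)) != 0%R)) (fun j _ => E2 j)).
    rewrite [X in _ + X]big1_eq addn0.
    rewrite big_nat_cond; under eq_bigr => c.
      move=> /andP[/andP[_ Hc'] _].
      rewrite colB_split1 // {1}/a0 /= /colA big_nat_cond big1 ?addr0; last first.
        by move=> i _; rewrite /a0 /= mul0r.
      over.
    by rewrite (chain_ring_gs1 Hc) -big_nat_cond sum_nat_const_nat subn0 muln1.
  exists (\row_(c < Lw s T k.+2) colB g s T k.+2 a0 c)%R, (\row_(c < Lw s T k.+2) 0)%R.
  have Hd' := Hd; rewrite /= in Hd'.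
  split => //.
  - exists (fun i => a0 i); apply/rowP => c; rewrite !mxE /colB big_mkord //.
  - exists (fun _ => 0%R); apply/rowP => c; rewrite !mxE big1 // => i _; by rewrite mul0r.
  - apply/negP => /eqP E; move: Hd'; rewrite E /hamming.
    have -> : [set j | (\row_(c < Lw s T k.+2) (0 : R))%R ord0 j != (\row_(c < Lw s T k.+2) (0 : R))%R ord0 j] = set0.
      by apply/setP => j; rewrite !inE eqxx.
    by rewrite cards0 => H; move: (expn_gt0 (size T) (s * k.+1)); rewrite q0 -/Q1 -H.
move=> x y [a ->] [b ->] Hxy.
set d := fun n => (a (inord n) - b (inord n))%R.
have Hrow : forall c : nat, ((\sum_(i < k.+2) a i * Gbeta g s T k.+2 i c) -
    (\sum_(i < k.+2) b i * Gbeta g s T k.+2 i c))%R = colB g s T k.+2 d c.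
  by move=> c; rewrite !sum_ord_colB /colB -sumrB; apply: eq_bigr => i _; rewrite mulrBl.
rewrite (hamming_row _ (fun c => \sum_(i < k.+2) a i * Gbeta g s T k.+2 i c)%R
   (fun c => \sum_(i < k.+2) b i * Gbeta g s T k.+2 i c)%R).
under eq_bigr do rewrite -subr_eq0 Hrow.
have [i0 Hi0 Hd0] : exists2 i, i < k.+2 & (d i != 0)%R.
  case: (boolP [exists i : 'I_k.+2, d i != 0%R]) => [/existsP[i Hi]|Hn]; first by exists i.
  exfalso; move/negP: Hxy; apply; apply/eqP/rowP => c; rewrite !mxE; apply/eqP.
  rewrite -subr_eq0 Hrow /colB big_nat_cond big1 // => l; rewrite andbT => /andP[_ Hl].
  move/existsPn: Hn => /(_ (Ordinal Hl)) /negPn /eqP H.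
  have H' : d l = 0%R := H. by rewrite H' mul0r.
pose P := fun m => [exists i : 'I_k.+2, (g ^+ m * d i != 0)%R].
have exP : exists m, P m.
  by exists 0; apply/existsP; exists (Ordinal Hi0); rewrite expr0 mul1r.
have ubP : forall m, P m -> m <= s.
  move=> m /existsP[i Hi]; rewrite leqNgt; apply/negP => Hm; move: Hi.
  by rewrite -(subnK (ltnW Hm)) exprD (chain_ring_gs Hc) mulr0 mul0r eqxx.
case: (ex_maxnP exP ubP) => m Pm Hmax.
have Hsoc : forall i, i < k.+2 -> (g * (g ^+ m * d i) = 0)%R.
  move=> i Hi; apply/eqP; apply/negPn/negP => Hne.
  have : P m.+1 by apply/existsP; exists (Ordinal Hi); rewrite exprS -mulrA.
  by move/Hmax; rewrite ltnn.
have Hnz : exists2 i, i < k.+2 & (g ^+ m * d i != 0)%R.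
  move: Pm; rewrite /P => /existsP [i Hi]; exists (val i); [exact: ltn_ord | exact: Hi].
have Hb := beta_nz Hc Ht Hsoc Hnz.
apply: leq_trans Hb _; apply: leq_sum => c _.
have -> : colB g s T k.+2 (fun n => g ^+ m * d n)%R c = (g ^+ m * colB g s T k.+2 d c)%R.
  by rewrite /colB mulr_sumr; apply: eq_bigr => i _; rewrite mulrA.
case E: (colB g s T k.+2 d c == 0%R).
  by rewrite (eqP E) mulr0 eqxx.
by rewrite leq_b1.
Qed.
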